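(* Let $R$ be a commutative Noetherian ring, $M$ a finitely generated $R$-module, and $X \subseteq \mathrm{Spec}(R)$ a basic set. For any subset $S \subseteq M$ there exists a finite set of primes $\Lambda \subseteq X$ such that for every $\mathfrak{p} \in X \setminus \Lambda$ there exists $\mathfrak{q} \in \Lambda$ with $\mathfrak{q} \subsetneq \mathfrak{p}$ and $\delta_\mathfrak{p}(S,M) = \delta_\mathfrak{q}(S,M)$.
   Context: A subset $X \subseteq \mathrm{Spec}(R)$ is basic if, whenever the intersection of a family of primes in $X$ is a prime ideal, that intersection belongs to $X$. For $S \subseteq M$ let $\langle S \rangle$ be the $R$-submodule generated by $S$. For a prime $\mathfrak{p}$, $\delta_\mathfrak{p}(S,M)$ is the largest integer $n \ge 0$ such that there is a free $R_\mathfrak{p}$-submodule $G \subseteq \langle S\rangle_\mathfrak{p}$ of rank $n$ which is a direct summand of $M_\mathfrak{p}$. *)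

(* Defs.v *)
From HB Require Import structures.
From mathcomp Require Import all_boot all_order all_algebra.
From mathcomp Require Import boolp classical_sets cardinality.
Set Implicit Arguments. Unset Strict Implicit. Unset Printing Implicit Defensive.
Import GRing.Theory.
Local Open Scope classical_set_scope.
Local Open Scope ring_scope.

(* Localizations R_p and M_p are represented by fractions (pairs
   numerator/denominator) with denominators outside p, together with the usual
   equivalence relation; all localized notions are stated up to that relation. *)

Section CommAlg.
Variables (R : comPzRingType) (M : lmodType R).

Definition ideal (I : set R) : Prop :=
  [/\ I 0, (forall x y, I x -> I y -> I (x + y)) & (forall a x, I x -> I (a * x))].

Definition prime_ideal (p : set R) : Prop :=
  [/\ ideal p, ~ p 1 & (forall a b, p (a * b) -> p a \/ p b)].

Definition noetherian : Prop :=
  forall I : set R, ideal I ->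
    exists s : seq R, (forall x, x \in s -> I x) /\
      (forall x, I x <-> exists c : 'I_(size s) -> R, x = \sum_(i < size s) c i * s`_i).

Definition fin_gen_module : Prop :=
  exists s : seq M, forall m : M,
    exists c : 'I_(size s) -> R, m = \sum_(i < size s) c i *: s`_i.

Definition gen_submod (S : set M) : set M :=
  [set m | exists l : seq (R * M), (forall x, x \in l -> S x.2) /\
             m = \sum_(x <- l) x.1 *: x.2].

Definition basic (X : set (set R)) : Prop :=
  forall F : set (set R), F `<=` X ->
    prime_ideal (\bigcap_(q in F) q) -> X (\bigcap_(q in F) q).

(* elements of M_p: pairs (m, s) with s \notin p; of R_p: pairs (a, t) with t \notin p *)
Definition locM_eq (p : set R) (x y : M * R) : Prop :=
  exists u, ~ p u /\ u *: (y.2 *: x.1 - x.2 *: y.1) = 0.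
Definition locR_eq (p : set R) (a b : R * R) : Prop :=
  exists u, ~ p u /\ u * (b.2 * a.1 - a.2 * b.1) = 0.
Definition loc_add (x y : M * R) : M * R := (y.2 *: x.1 + x.2 *: y.1, x.2 * y.2).
Definition loc_scale (a : R * R) (x : M * R) : M * R := (a.1 *: x.1, a.2 * x.2).
Definition loc_zero : M * R := (0, 1).

Definition loc_submod (p : set R) (N : set (M * R)) : Prop :=
  [/\ (forall x, N x -> ~ p x.2),
      (forall x y, N x -> ~ p y.2 -> locM_eq p x y -> N y),
      N loc_zero,
      (forall x y, N x -> N y -> N (loc_add x y)) &
      (forall a x, ~ p a.2 -> N x -> N (loc_scale a x))].

Definition loc_of (p : set R) (S : set M) : set (M * R) :=
  [set x | ~ p x.2 /\ exists m s, gen_submod S m /\ ~ p s /\ locM_eq p x (m, s)].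

Definition loc_comb (n : nat) (a : 'I_n -> R * R) (g : 'I_n -> M * R) : M * R :=
  \big[loc_add/loc_zero]_(i < n) loc_scale (a i) (g i).

Definition loc_free_rank (p : set R) (G : set (M * R)) (n : nat) : Prop :=
  loc_submod p G /\
  exists g : 'I_n -> M * R,
    (forall i, G (g i)) /\
    (forall x, G x <-> (~ p x.2 /\ exists a : 'I_n -> R * R,
        (forall i, ~ p (a i).2) /\ locM_eq p x (loc_comb a g))) /\
    (forall a : 'I_n -> R * R, (forall i, ~ p (a i).2) ->
        locM_eq p (loc_comb a g) loc_zero -> forall i, locR_eq p (a i) (0, 1)).

Definition loc_direct_summand (p : set R) (G : set (M * R)) : Prop :=
  exists N : set (M * R), loc_submod p N /\
    (forall x, G x -> N x -> locM_eq p x loc_zero) /\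
    (forall x, ~ p x.2 -> exists y z, G y /\ N z /\ locM_eq p x (loc_add y z)).

Definition delta_prop (p : set R) (S : set M) (n : nat) : Prop :=
  exists G : set (M * R), loc_free_rank p G n /\ G `<=` loc_of p S /\
    loc_direct_summand p G.

Definition delta (p : set R) (S : set M) : nat :=
  xget 0%N [set n | delta_prop p S n /\ forall m, delta_prop p S m -> (m <= n)%N].

End CommAlg.

(* Main.v *)
Require Import Defs.
From HB Require Import structures.
From mathcomp Require Import all_boot all_order all_algebra.
From mathcomp Require Import boolp classical_sets cardinality.
From mathcomp Require Import ring.
Set Implicit Arguments. Unset Strict Implicit. Unset Printing Implicit Defensive.
Import GRing.Theory.



Section PrimeBasics.
Local Open Scope ring_scope.
Variable R : comPzRingType.
Set Default Proof Using "All".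
Variable p : set R.
Hypothesis Hp : prime_ideal p.

Lemma p0 : p 0. Proof. by case: Hp => -[]. Qed.
Lemma pN1 : ~ p 1. Proof. by case: Hp. Qed.
Lemma pM (a b : R) : ~ p a -> ~ p b -> ~ p (a * b).
Proof. by case: Hp => _ _ H na nb /H []. Qed.
Lemma pMl (a b : R) : p b -> p (a * b).
Proof. by case: Hp => -[_ _ H] _ _; apply: H. Qed.
Lemma pMr (a b : R) : p a -> p (a * b).
Proof. by rewrite mulrC; apply: pMl. Qed.
Lemma pprod (I : Type) (r : seq I) (P : pred I) (F : I -> R) :
  (forall i, P i -> ~ p (F i)) -> ~ p (\prod_(i <- r | P i) F i).
Proof. by move=> H; refine (big_ind (fun t : R => ~ p t) pN1 _ H); exact: pM. Qed.
Lemma pX (a : R) n : ~ p a -> ~ p (a ^+ n).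
Proof. by move=> H; elim: n => [|n IH]; rewrite ?expr0 ?exprS; [exact: pN1|exact: pM]. Qed.

Definition zp (V : lmodType R) (v : V) := exists u, ~ p u /\ u *: v = 0.
Definition zpR (r : R) := exists u, ~ p u /\ u * r = 0.

Lemma zp0 (V : lmodType R) : zp (0 : V).
Proof. by exists 1; split; [exact: pN1| rewrite scaler0]. Qed.
Lemma zpD (V : lmodType R) (v w : V) : zp v -> zp w -> zp (v + w).
Proof.
move=> [u [nu hu]] [u' [nu' hu']]; exists (u * u'); split; first exact: pM.
have -> : (u * u') *: (v + w) = u' *: (u *: v) + u *: (u' *: w).
  by rewrite !scalerA scalerDr [u' * u]mulrC.
by rewrite hu hu' !scaler0 addr0.
Qed.
Lemma zpZ (V : lmodType R) r (v : V) : zp v -> zp (r *: v).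
Proof. by move=> [u [nu hu]]; exists u; split => //; rewrite scalerA mulrC -scalerA hu scaler0. Qed.
Lemma zpN (V : lmodType R) (v : V) : zp v -> zp (- v).
Proof. by move=> /(zpZ (-1)); rewrite scaleN1r. Qed.
Lemma zpB (V : lmodType R) (v w : V) : zp v -> zp w -> zp (v - w).
Proof. by move=> hv /zpN; apply: zpD. Qed.
Lemma zp_cancel (V : lmodType R) s (v : V) : ~ p s -> zp (s *: v) -> zp v.
Proof. by move=> ns [u [nu hu]]; exists (u * s); split; [exact: pM| rewrite -scalerA]. Qed.
Lemma zp_sum (V : lmodType R) (I : Type) (r : seq I) (P : pred I) (F : I -> V) :
  (forall i, P i -> zp (F i)) -> zp (\sum_(i <- r | P i) F i).
Proof. by move=> H; apply: (big_ind (@zp V)) => //; [exact: zp0| exact: zpD]. Qed.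
Lemma zp_map (V W : lmodType R) (f : V -> W) (v : V) :
  (forall u, f (u *: v) = u *: f v) -> f 0 = 0 -> zp v -> zp (f v).
Proof. by move=> Hf H0 [u [nu hu]]; exists u; split => //; rewrite -Hf hu. Qed.
Lemma zpR_zp (r : R) : zpR r <-> zp (r : R^o).
Proof. by []. Qed.

End PrimeBasics.

Section Frac.
Local Open Scope ring_scope.
Variables (R : comPzRingType) (M : lmodType R).
Implicit Types (x y z w : M * R) (a b c : R * R).

Lemma loc_addA : associative (@loc_add R M).
Proof.
move=> [x1 x2] [y1 y2] [w1 w2]; rewrite /loc_add /=; congr pair; last by rewrite mulrA.
rewrite !scalerDr !scalerA addrA; congr (_ + _ + _); congr (_ *: _); ring.
Qed.

Lemma loc_addC : commutative (@loc_add R M).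
Proof. by move=> [x1 x2] [y1 y2]; rewrite /loc_add /= addrC mulrC. Qed.

Lemma loc_add0 : left_id (loc_zero M) (@loc_add R M).
Proof. by move=> [x1 x2]; rewrite /loc_add /= scaler0 add0r scale1r mul1r. Qed.

HB.instance Definition _ := Monoid.isComLaw.Build (M * R)%type (loc_zero M) (@loc_add R M)
  loc_addA loc_addC loc_add0.

Lemma loc_scaleA a b x : loc_scale a (loc_scale b x) = loc_scale (a.1 * b.1, a.2 * b.2) x.
Proof. by rewrite /loc_scale /= scalerA mulrA. Qed.


Lemma loc_add_num1 (m m' : M) : loc_add (m, 1) (m', 1) = (m + m', 1).
Proof. by rewrite /loc_add /= !scale1r mulr1. Qed.

Lemma loc_comb1 n (b : 'I_n -> R) (h : 'I_n -> M) :
  loc_comb (fun i => (b i, 1)) (fun i => (h i, 1)) = (\sum_i b i *: h i, 1).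
Proof.
rewrite /loc_comb.
apply: (big_ind2 (fun X Y => X = (Y, 1))) => //.
- by move=> X1 Y1 X2 Y2 -> ->; rewrite loc_add_num1.
- by move=> i _; rewrite /loc_scale /= mulr1.
Qed.

Set Default Proof Using "All".
Variable p : set R.
Hypothesis Hp : prime_ideal p.

Local Notation "x ~= y" := (locM_eq p x y) (at level 70).

Lemma leqE x y : x ~= y <-> zp p (y.2 *: x.1 - x.2 *: y.1).
Proof. by []. Qed.

Lemma leq_refl x : x ~= x.
Proof. by apply/leqE; rewrite subrr; apply: (zp0 Hp). Qed.

Lemma leq_sym x y : x ~= y -> y ~= x.
Proof. by move/leqE/(zpN Hp); rewrite opprB. Qed.

Lemma leq_trans y x z : ~ p y.2 -> x ~= y -> y ~= z -> x ~= z.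
Proof.
move=> ny /leqE hxy /leqE hyz; apply/leqE.
apply: (zp_cancel Hp ny).
have -> : y.2 *: (z.2 *: x.1 - x.2 *: z.1) =
   z.2 *: (y.2 *: x.1 - x.2 *: y.1) + x.2 *: (z.2 *: y.1 - y.2 *: z.1).
  rewrite !scalerBr !scalerA.
  have -> : z.2 * x.2 = x.2 * z.2 by ring.
  rewrite addrA subrK; congr (_ *: _ - _ *: _); ring.
by apply: (zpD Hp); apply: (zpZ Hp).
Qed.

Lemma leq_addl x x' y : x ~= x' -> loc_add x y ~= loc_add x' y.
Proof.
move/leqE=> h; apply/leqE; rewrite /loc_add /=.
have -> : (x'.2 * y.2) *: (y.2 *: x.1 + x.2 *: y.1) - (x.2 * y.2) *: (y.2 *: x'.1 + x'.2 *: y.1)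
  = (y.2 * y.2) *: (x'.2 *: x.1 - x.2 *: x'.1).
  rewrite !scalerDr ?scalerBr !scalerN !scalerA opprD addrACA.
  have -> : x'.2 * y.2 * x.2 = x.2 * y.2 * x'.2 by ring.
  rewrite subrr addr0; congr (_ *: _ - _ *: _); ring.
exact: (zpZ Hp).
Qed.

Lemma leq_addr x y y' : y ~= y' -> loc_add x y ~= loc_add x y'.
Proof. by rewrite !(loc_addC x); apply: leq_addl. Qed.

Lemma leq_scale a x x' : x ~= x' -> loc_scale a x ~= loc_scale a x'.
Proof.
move/leqE=> h; apply/leqE; rewrite /loc_scale /=.
have -> : (a.2 * x'.2) *: (a.1 *: x.1) - (a.2 * x.2) *: (a.1 *: x'.1)
  = (a.2 * a.1) *: (x'.2 *: x.1 - x.2 *: x'.1).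
  rewrite !scalerBr !scalerA; congr (_ *: _ - _ *: _); ring.
exact: (zpZ Hp).
Qed.

Lemma scale_add c x y : loc_scale c (loc_add x y) ~= loc_add (loc_scale c x) (loc_scale c y).
Proof.
apply/leqE; rewrite /loc_scale /loc_add /=.
have -> : (c.2 * x.2 * (c.2 * y.2)) *: (c.1 *: (y.2 *: x.1 + x.2 *: y.1)) -
  (c.2 * (x.2 * y.2)) *: ((c.2 * y.2) *: (c.1 *: x.1) + (c.2 * x.2) *: (c.1 *: y.1)) = 0.
  rewrite !scalerDr !scalerA; apply/eqP; rewrite subr_eq0; apply/eqP.
  congr (_ *: _ + _ *: _); ring.
exact: (zp0 Hp).
Qed.

Lemma leq_frac (m : M) s t : (m, s) ~= (t *: m, t * s).
Proof.
apply/leqE => /=; rewrite !scalerA.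
have -> : t * s = s * t by ring.
by rewrite subrr; apply: (zp0 Hp).
Qed.

Lemma leq_num (m m' : M) s : zp p (m - m') -> (m, s) ~= (m', s).
Proof. by move=> h; apply/leqE => /=; rewrite -scalerBr; apply: (zpZ Hp). Qed.


Definition Er x y := [/\ ~ p x.2, ~ p y.2 & x ~= y].

Lemma Er_sym x y : Er x y -> Er y x.
Proof. by case=> ? ? /leq_sym. Qed.

Lemma Er_trans y x z : Er x y -> Er y z -> Er x z.
Proof. by case=> ? ny h1 [_ ? h2]; split => //; apply: (leq_trans ny). Qed.

Lemma Er_refl x : ~ p x.2 -> Er x x.
Proof. by move=> n; split => //; apply: leq_refl. Qed.

Lemma Er_add x x' y y' : Er x y -> Er x' y' -> Er (loc_add x x') (loc_add y y').
Proof.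
case=> nx ny h [nx' ny' h']; split; [by rewrite /=; apply: (pM Hp) | by rewrite /=; apply: (pM Hp)|].
apply: (@leq_trans (loc_add y x')); first by rewrite /=; repeat apply: (pM Hp).
  exact: leq_addl.
exact: leq_addr.
Qed.

Lemma Er_zero : Er (loc_zero M) (loc_zero M).
Proof. by apply: Er_refl; exact: (pN1 Hp). Qed.

Lemma Er_big n (F G : 'I_n -> M * R) : (forall i, Er (F i) (G i)) ->
  Er (\big[@loc_add R M/loc_zero M]_i F i) (\big[@loc_add R M/loc_zero M]_i G i).
Proof. move=> H; apply: big_ind2 => //; [exact: Er_zero | move=> *; exact: Er_add]. Qed.

Lemma Er_scale c x y : ~ p c.2 -> Er x y -> Er (loc_scale c x) (loc_scale c y).
Proof. by move=> nc [nx ny h]; split; [rewrite /=; repeat apply: (pM Hp)|rewrite /=; repeat apply: (pM Hp)|apply: leq_scale]. Qed.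

Lemma Er_scale_add c x y : ~ p c.2 -> ~ p x.2 -> ~ p y.2 ->
  Er (loc_scale c (loc_add x y)) (loc_add (loc_scale c x) (loc_scale c y)).
Proof. by move=> nc nx ny; split; [rewrite /=; repeat apply: (pM Hp)|rewrite /=; repeat apply: (pM Hp)|apply: scale_add]. Qed.

Lemma Er_scale_big n c (F : 'I_n -> M * R) : ~ p c.2 -> (forall i, ~ p (F i).2) ->
  Er (loc_scale c (\big[@loc_add R M/loc_zero M]_i F i))
     (\big[@loc_add R M/loc_zero M]_i loc_scale c (F i)).
Proof.
move=> nc nF.
suff [] : ~ p (\big[@loc_add R M/loc_zero M]_i F i).2 /\ Er (loc_scale c (\big[@loc_add R M/loc_zero M]_i F i))
     (\big[@loc_add R M/loc_zero M]_i loc_scale c (F i)) by [].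
apply: (big_ind2 (fun X Y => ~ p X.2 /\ Er (loc_scale c X) Y)) => //.
- split; first exact: (pN1 Hp).
  split; [by rewrite /= mulr1 | exact: (pN1 Hp) | apply/leqE; rewrite /= !scaler0 subrr; exact: (zp0 Hp)].
- move=> X1 Y1 X2 Y2 [n1 h1] [n2 h2]; split; first by rewrite /=; repeat apply: (pM Hp).
  apply: (Er_trans (Er_scale_add nc n1 n2)); exact: Er_add.
- by move=> i _; split => //; apply: Er_refl; rewrite /=; repeat apply: (pM Hp).
Qed.

Lemma comb_denom n (a : 'I_n -> R * R) (g : 'I_n -> M * R) :
  (forall i, ~ p (a i).2) -> (forall i, ~ p (g i).2) -> ~ p (loc_comb a g).2.
Proof.
move=> na ng; rewrite /loc_comb.
apply: (big_ind (fun X : M * R => ~ p X.2)) => //=; first exact: (pN1 Hp).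
- by move=> X Y nX nY; apply: (pM Hp).
- by move=> i _; apply: (pM Hp).
Qed.

Lemma clear_denoms n (a : 'I_n -> R * R) (h : 'I_n -> M) :
  (forall i, ~ p (a i).2) ->
  Er (loc_scale (\prod_i (a i).2, 1) (loc_comb a (fun i => (h i, 1))))
     (\sum_i ((a i).1 * \prod_(j | j != i) (a j).2) *: h i, 1).
Proof.
move=> na; rewrite -loc_comb1 /loc_comb.
apply: (Er_trans (Er_scale_big _ _)); first exact: (pN1 Hp).
  by move=> i; rewrite /= mulr1.
apply: Er_big => i; rewrite loc_scaleA /=; split; [by rewrite /= mul1r mulr1 | rewrite /= mulr1; exact: (pN1 Hp) |].
apply/leqE; rewrite /= !mulr1 !mul1r scale1r scalerA.
rewrite (bigD1 i) //=.
have -> : (a i).2 * \prod_(j < n | j != i) (a j).2 * (a i).1 =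
   (a i).2 * ((a i).1 * \prod_(j < n | j != i) (a j).2) by ring.
rewrite subrr; exact: (zp0 Hp).
Qed.

End Frac.
Unset Default Proof Using.




Section GenSub.
Local Open Scope ring_scope.
Variables (R : comPzRingType) (M : lmodType R) (S : set M).

Lemma gs0 : gen_submod S 0.
Proof. by exists [::]; split => //; rewrite big_nil. Qed.

Lemma gsD m m' : gen_submod S m -> gen_submod S m' -> gen_submod S (m + m').
Proof.
move=> [l [hl ->]] [l' [hl' ->]]; exists (l ++ l'); split; last by rewrite big_cat.
by move=> x; rewrite mem_cat => /orP [/hl|/hl'].
Qed.

Lemma gsZ r m : gen_submod S m -> gen_submod S (r *: m).
Proof.
move=> [l [hl ->]]; exists [seq (r * x.1, x.2) | x <- l]; split.
  by move=> x /mapP [y /hl ? ->].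
by rewrite big_map scaler_sumr; apply: eq_bigr => x _; rewrite scalerA.
Qed.

Lemma gs_sum n (b : 'I_n -> R) (h : 'I_n -> M) : (forall j, gen_submod S (h j)) ->
  gen_submod S (\sum_j b j *: h j).
Proof.
move=> H; apply: (big_ind (gen_submod S)); [exact: gs0 | exact: gsD |].
by move=> j _; apply: gsZ.
Qed.

End GenSub.

Section Lin.
Local Open Scope ring_scope.
Variables (R : comPzRingType) (M : lmodType R) (n : nat).
Definition lin (psi : M -> 'rV[R]_n) := forall r x y, psi (r *: x + y) = r *: psi x + psi y.
Variable psi : M -> 'rV[R]_n.
Hypothesis Hpsi : lin psi.
Lemma psi0 : psi 0 = 0.
Proof.
have := Hpsi 1 0 0; rewrite scaler0 addr0 scale1r => /eqP.
by rewrite -subr_eq0 opprD addrA subrr add0r oppr_eq0 => /eqP.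
Qed.
Lemma psiD x y : psi (x + y) = psi x + psi y.
Proof. by have := Hpsi 1 x y; rewrite !scale1r. Qed.
Lemma psiZ r x : psi (r *: x) = r *: psi x.
Proof. by have := Hpsi r x 0; rewrite !addr0 psi0 addr0. Qed.
Lemma psiB x y : psi (x - y) = psi x - psi y.
Proof. by rewrite -scaleN1r psiD psiZ scaleN1r. Qed.
Lemma psi_sum (I : Type) (r : seq I) (P : pred I) (F : I -> M) :
  psi (\sum_(i <- r | P i) F i) = \sum_(i <- r | P i) psi (F i).
Proof. by apply: big_morph; [exact: psiD | exact: psi0]. Qed.
End Lin.

Section LemmaA.
Local Open Scope ring_scope.
Variables (R : comPzRingType) (M : lmodType R) (p : set R).
Hypothesis Hp : prime_ideal p.
Variables (S : set M) (n : nat) (h : 'I_n -> M) (psi : M -> 'rV[R]_n).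
Hypothesis hS : forall j, gen_submod S (h j).
Hypothesis Hpsi : lin psi.
Hypothesis Hdet : ~ p (\det (\matrix_(j < n) psi (h j))).

Local Notation A := (\matrix_(j < n) psi (h j)).
Local Notation hh := (fun j => (h j, 1)).
Local Notation "x ~= y" := (locM_eq p x y) (at level 70).

Lemma zp_mulmx m k (v : 'M[R]_(m, k)) (B : 'M[R]_(k, n)) : zp p v -> zp p (v *m B).
Proof. by move=> [u [nu hu]]; exists u; split => //; rewrite scalemxAl hu mul0mx. Qed.

Lemma KA (b : 'I_n -> R) : zp p (psi (\sum_j b j *: h j)) -> forall j, zpR p (b j).
Proof.
have e : psi (\sum_j b j *: h j) = (\row_j b j) *m A.
  rewrite (psi_sum Hpsi) mulmx_sum_row; apply: eq_bigr => j _.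
  by rewrite (psiZ Hpsi) rowK mxE.
rewrite e => /(zp_mulmx (\adj A)); rewrite -mulmxA mul_mx_adj mul_mx_scalar.
move=> /(zp_cancel Hp Hdet) [u [nu hu]] j; exists u; split => //.
by have := congr1 (fun N : 'rV_n => N 0 j) hu; rewrite !mxE.
Qed.

Lemma psi_leq x y : x ~= y -> zp p (y.2 *: psi x.1 - x.2 *: psi y.1).
Proof.
move/(leqE Hp) => H; rewrite -(psiZ Hpsi) -(psiZ Hpsi) -(psiB Hpsi).
apply: (@zp_map _ _ Hp _ _ psi) => [u||]; [exact: psiZ | exact: psi0 | exact: H].
Qed.

Definition GA := fun x : M * R => ~ p x.2 /\
  exists a : 'I_n -> R * R, (forall i, ~ p (a i).2) /\ x ~= loc_comb a hh.

Definition radd (a b : R * R) := (b.2 * a.1 + a.2 * b.1, a.2 * b.2).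

Lemma comb_add (a b : 'I_n -> R * R) :
  loc_add (loc_comb a hh) (loc_comb b hh) = loc_comb (fun i => radd (a i) (b i)) hh.
Proof.
rewrite /loc_comb -big_split /=; apply: eq_bigr => i _.
by rewrite /loc_add /loc_scale /radd /= !mulr1 !scalerA scalerDl; congr pair.
Qed.

Lemma comb_hh_denom (a : 'I_n -> R * R) : (forall i, ~ p (a i).2) -> ~ p (loc_comb a hh).2.
Proof. by move=> na; apply: comb_denom => // i; exact: (pN1 Hp). Qed.

Lemma GA_submod : loc_submod p GA.
Proof.
split.
- by move=> x [].
- move=> x y [nx [a [na hx]]] ny hxy; split => //; exists a; split => //.
  exact: (leq_trans Hp nx (leq_sym Hp hxy) hx).
- split; first exact: (pN1 Hp).
  exists (fun _ => (0, 1)); split; first by move=> ?; exact: (pN1 Hp).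
  rewrite (loc_comb1 (fun _ => 0)) (_ : \sum_i _ = 0); first exact: (leq_refl Hp (loc_zero M)).
  by rewrite big1 // => i _; rewrite scale0r.
- move=> x y [nx [a [na hx]]] [ny [b [nb hy]]].
  split; first by rewrite /=; apply: (pM Hp).
  exists (fun i => radd (a i) (b i)); split; first by move=> i; rewrite /=; apply: (pM Hp).
  rewrite -(comb_add a b).
  have E : Er p (loc_add x y) (loc_add (loc_comb a hh) (loc_comb b hh)).
    by apply: (Er_add Hp); split => //; apply: comb_hh_denom.
  by case: E.
- move=> c x nc [nx [a [na hx]]].
  split; first by rewrite /=; apply: (pM Hp).
  exists (fun i => (c.1 * (a i).1, c.2 * (a i).2)); split; first by move=> i; rewrite /=; apply: (pM Hp).
  have E1 : Er p (loc_scale c x) (loc_scale c (loc_comb a hh)).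
    by apply: Er_scale => //; split => //; apply: comb_hh_denom.
  have E2 : Er p (loc_scale c (loc_comb a hh))
      (\big[@loc_add R M/loc_zero M]_i loc_scale c (loc_scale (a i) (h i, 1))).
    by apply: (Er_scale_big Hp) => // i; rewrite /= mulr1.
  have eb : \big[@loc_add R M/loc_zero M]_i loc_scale c (loc_scale (a i) (h i, 1)) =
     loc_comb (fun i => (c.1 * (a i).1, c.2 * (a i).2)) hh.
    by apply: eq_bigr => i _; rewrite loc_scaleA.
  by case: (Er_trans Hp E1 E2); rewrite eb.
Qed.


Lemma GA_hh i : GA (h i, 1).
Proof.
split; first exact: (pN1 Hp).
exists (fun j => ((j == i)%:R, 1)); split; first by move=> ?; exact: (pN1 Hp).
rewrite (loc_comb1 (fun j => (j == i)%:R)).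
rewrite (bigD1 i) //= eqxx scale1r big1 ?addr0; first exact: (leq_refl Hp).
by move=> j /negbTE ->; rewrite scale0r.
Qed.

Lemma GA_num x : GA x -> exists T (b : 'I_n -> R), ~ p T /\ x ~= (\sum_j b j *: h j, T).
Proof.
case=> nx [a [na hx]].
have [_ _ /(leqE Hp) E] := clear_denoms Hp h na.
exists (\prod_i (a i).2), (fun i => (a i).1 * \prod_(j | j != i) (a j).2); split.
  exact: (pprod Hp).
apply: (leq_trans Hp (comb_hh_denom na) hx); apply/(leqE Hp).
by move: E; rewrite /= scale1r mul1r.
Qed.

Lemma zpR_sum (b : 'I_n -> R) : (forall j, zpR p (b j)) -> zp p (\sum_j b j *: h j).
Proof.
move=> H; apply: (zp_sum Hp) => j _; have [u [nu hu]] := H j.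
by exists u; split => //; rewrite scalerA hu scale0r.
Qed.

Lemma GA_indep (a : 'I_n -> R * R) : (forall i, ~ p (a i).2) ->
  loc_comb a hh ~= loc_zero M -> forall i, locR_eq p (a i) (0, 1).
Proof.
move=> na hC i.
have [_ _ E] := clear_denoms Hp h na.
have E2 : loc_scale (\prod_i (a i).2, 1) (loc_comb a hh) ~= loc_scale (\prod_i (a i).2, 1) (loc_zero M).
  exact: leq_scale.
have E3 := leq_trans Hp _ (leq_sym Hp E) E2.
have /(leqE Hp) : (\sum_i ((a i).1 * \prod_(j | j != i) (a j).2) *: h i, 1) ~=
   loc_scale (\prod_i (a i).2, 1) (loc_zero M).
  apply: E3; rewrite /= mul1r; exact: comb_hh_denom.
rewrite /= !scaler0 mulr1 scale1r subr0 => Hm.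
have Hpm : zp p (psi (\sum_i ((a i).1 * \prod_(j | j != i) (a j).2) *: h i)).
  apply: (@zp_map _ _ Hp _ _ psi) => [u||]; [exact: psiZ | exact: psi0 | exact: Hm].
have [u [nu hu]] := KA Hpm i.
exists (u * \prod_(j | j != i) (a j).2); split.
  by apply: (pM Hp) => //; apply: (pprod Hp).
by rewrite /= mul1r mulr0 subr0 -hu; ring.
Qed.

Lemma GA_sub : (GA `<=` loc_of p S)%classic.
Proof.
move=> x Gx; split; first by case: Gx.
have [T [b [nT E]]] := GA_num Gx.
by exists (\sum_j b j *: h j), T; split => //; apply: gs_sum.
Qed.

Definition NA := fun x : M * R => ~ p x.2 /\ zp p (psi x.1).

Lemma NA_submod : loc_submod p NA.
Proof.
split.
- by move=> x [].
- move=> x y [nx hx] ny hxy; split => //.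
  have E := psi_leq hxy.
  apply: (zp_cancel Hp nx).
  have -> : x.2 *: psi y.1 = y.2 *: psi x.1 - (y.2 *: psi x.1 - x.2 *: psi y.1).
    by rewrite opprB addrC subrK.
  by apply: (zpB Hp) => //; apply: (zpZ Hp).
- split; first exact: (pN1 Hp).
  by rewrite /= (psi0 Hpsi); apply: (zp0 Hp).
- move=> x y [nx hx] [ny hy]; split; first by rewrite /=; apply: (pM Hp).
  by rewrite /= (psiD Hpsi) !(psiZ Hpsi); apply: (zpD Hp); apply: (zpZ Hp).
- move=> c x nc [nx hx]; split; first by rewrite /=; apply: (pM Hp).
  by rewrite /= (psiZ Hpsi); apply: (zpZ Hp).
Qed.

Lemma psi_comb (c : 'rV[R]_n) : psi (\sum_j c 0 j *: h j) = c *m A.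
Proof.
rewrite (psi_sum Hpsi) mulmx_sum_row; apply: eq_bigr => j _.
by rewrite (psiZ Hpsi) rowK.
Qed.

Lemma GN x : GA x -> NA x -> x ~= loc_zero M.
Proof.
move=> Gx [nx hx]; have [T [b [nT /(leqE Hp) E]]] := GA_num Gx.
move: E => /=; set m := \sum_j b j *: h j => E.
have E1 : zp p (T *: psi x.1 - x.2 *: psi m).
  rewrite -!(psiZ Hpsi) -(psiB Hpsi).
  apply: (@zp_map _ _ Hp _ _ psi) => [u||]; [exact: psiZ | exact: psi0 | exact: E].
have E2 : zp p (psi m).
  apply: (zp_cancel Hp nx).
  have -> : x.2 *: psi m = T *: psi x.1 - (T *: psi x.1 - x.2 *: psi m).
    by rewrite opprB addrC subrK.
  by apply: (zpB Hp) => //; apply: (zpZ Hp).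
have Hm : zp p m by apply: zpR_sum; apply: KA.
apply/(leqE Hp); rewrite /= scaler0 subr0 scale1r; apply: (zp_cancel Hp nT).
have -> : T *: x.1 = (T *: x.1 - x.2 *: m) + x.2 *: m by rewrite subrK.
by apply: (zpD Hp) => //; apply: (zpZ Hp).
Qed.

Lemma cover x : ~ p x.2 -> exists y z, GA y /\ NA z /\ x ~= loc_add y z.
Proof.
move=> nx.
set v := psi x.1; set c := v *m \adj A; set d := \det A * x.2.
have nd : ~ p d by apply: (pM Hp).
set y := loc_scale (1, d) (\sum_j c 0 j *: h j, 1).
have Gy : GA y.
  have [_ _ _ _ Hs] := GA_submod.
  apply: Hs => //; rewrite -loc_comb1.
  split; first by rewrite loc_comb1; exact: (pN1 Hp).
  exists (fun j => (c 0 j, 1)); split; first by move=> ?; exact: (pN1 Hp).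
  exact: (leq_refl Hp).
set z := loc_add x (loc_scale (-1, 1) y).
exists y, z; split => //; split.
  split; first by rewrite /= !mul1r mulr1; apply: (pM Hp).
  have -> : z.1 = (1 * (d * 1)) *: x.1 + x.2 *: (-1 *: (1 *: \sum_j c 0 j *: h j)) by [].
  rewrite (psiD Hpsi) !(psiZ Hpsi) psi_comb /c -mulmxA mul_adj_mx mul_mx_scalar -/v.
  rewrite !scalerA mul1r mulr1 /d.
  have -> : x.2 * -1 * 1 * \det A = - (\det A * x.2) by ring.
  by rewrite scaleNr subrr; apply: (zp0 Hp).
rewrite /z loc_addA (loc_addC y) -loc_addA.
have -> : loc_add y (loc_scale (-1, 1) y) = (0, y.2 * (1 * y.2)).
  by rewrite /loc_add /loc_scale /= mul1r scaleN1r scalerN subrr.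
apply/(leqE Hp); rewrite /= scaler0 addr0 scalerA mulrC subrr; exact: (zp0 Hp).
Qed.

Lemma lemmaA : delta_prop p S n.
Proof.
exists GA; split; last split.
- split; first exact: GA_submod.
  exists hh; split; first exact: GA_hh.
  split; first by move=> x.
  exact: GA_indep.
- exact: GA_sub.
- exists NA; split; first exact: NA_submod.
  split; first by move=> x Gx Nx; apply: GN.
  exact: cover.
Qed.

End LemmaA.



Section LemmaB.
Local Open Scope ring_scope.
Variables (R : comPzRingType) (M : lmodType R) (p : set R).
Hypothesis Hp : prime_ideal p.
Hypothesis HR : noetherian R.
Hypothesis HM : fin_gen_module M.
Variables (S : set M) (n : nat).
Local Notation "x ~= y" := (locM_eq p x y) (at level 70).

Lemma zpR_fin (I : finType) (f : I -> R) : (forall i, zpR p (f i)) ->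
  exists u, ~ p u /\ forall i, u * f i = 0.
Proof.
move=> H; have [u hu] := choice H.
exists (\prod_i u i); split; first by apply: (pprod Hp) => i _; case: (hu i).
move=> i; rewrite (bigD1 i) //= -mulrA mulrCA.
by have [_ ->] := hu i; rewrite mulr0.
Qed.

Lemma zpR_cancel (s r : R) : ~ p s -> zpR p (s * r) -> zpR p r.
Proof. by move=> ns [u [nu hu]]; exists (u * s); split; [apply: (pM Hp)| rewrite -mulrA]. Qed.

Lemma zpR_mul (s r : R) : zpR p r -> zpR p (s * r).
Proof. by move=> [u [nu hu]]; exists u; split => //; rewrite mulrCA hu mulr0. Qed.

Lemma zpR_add (s r : R) : zpR p s -> zpR p r -> zpR p (s + r).
Proof.
move=> [u [nu hu]] [v [nv hv]]; exists (u * v); split; first exact: (pM Hp).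
have -> : u * v * (s + r) = v * (u * s) + u * (v * r) by ring.
by rewrite hu hv !mulr0 addr0.
Qed.

Variable G : set (M * R).
Variable g : 'I_n -> M * R.
Hypothesis Gsub : loc_submod p G.
Hypothesis Gg : forall i, G (g i).
Hypothesis Gchar : forall x, G x <-> (~ p x.2 /\ exists a : 'I_n -> R * R,
        (forall i, ~ p (a i).2) /\ locM_eq p x (loc_comb a g)).
Hypothesis Gind : forall a : 'I_n -> R * R, (forall i, ~ p (a i).2) ->
        locM_eq p (loc_comb a g) (loc_zero M) -> forall i, locR_eq p (a i) (0, 1).
Variable N : set (M * R).
Hypothesis Nsub : loc_submod p N.
Hypothesis GN : forall x, G x -> N x -> locM_eq p x (loc_zero M).
Hypothesis Gcov : forall x, ~ p x.2 -> exists y z, G y /\ N z /\ locM_eq p x (loc_add y z).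
Variables (h : 'I_n -> M) (s : 'I_n -> R).
Hypothesis ns : forall j, ~ p (s j).
Hypothesis gE : forall j, g j ~= (h j, s j).

Local Notation hh := (fun j => (h j, 1)).
Definition N' (m : M) := N (m, 1).

Lemma ng j : ~ p (g j).2.
Proof. by case: Nsub => _ _ _ _ _; case: Gsub => H _ _ _ _; apply: H. Qed.

Lemma N'0 : N' 0.
Proof. by case: Nsub. Qed.

Lemma N'lin r x y : N' x -> N' y -> N' (r *: x + y).
Proof.
case: Nsub => H1 H2 H3 H4 H5 nx ny.
have := H4 _ _ (H5 (r, 1) _ (pN1 Hp) nx) ny.
by rewrite /loc_add /loc_scale /= !mulr1 !scale1r.
Qed.

Lemma N'Z r x : N' x -> N' (r *: x).
Proof. by move=> nx; have := N'lin r nx N'0; rewrite addr0. Qed.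

Lemma N'D x y : N' x -> N' y -> N' (x + y).
Proof. by move=> nx ny; have := N'lin 1 nx ny; rewrite scale1r. Qed.

Lemma N'B x y : N' x -> N' y -> N' (x - y).
Proof. by move=> nx ny; apply: N'D => //; rewrite -scaleN1r; apply: N'Z. Qed.

Lemma N'_sum (I : Type) (r : seq I) (P : pred I) (F : I -> M) :
  (forall i, P i -> N' (F i)) -> N' (\sum_(i <- r | P i) F i).
Proof. by move=> H; apply: big_ind => //; [exact: N'0 | exact: N'D]. Qed.

Lemma N_num x : N x -> N' x.1.
Proof.
move=> Nx; case: Nsub => H1 H2 H3 H4 H5.
have nx := H1 _ Nx.
have := H5 (x.2, 1) _ (pN1 Hp) Nx => Nx'.
apply: (H2 _ _ Nx'); first exact: (pN1 Hp).
apply/(leqE Hp); rewrite /= mul1r scale1r subrr; exact: (zp0 Hp).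
Qed.

Lemma B1 (b : 'I_n -> R) : N' (\sum_j b j *: h j) -> forall j, zpR p (b j).
Proof.
move=> Nw.
set w := (\sum_j b j *: h j, 1 : R).
have Ew : Er p w (loc_comb (fun j => (b j * s j, 1)) g).
  rewrite /w -(loc_comb1 b h) /loc_comb; apply: (Er_big Hp) => j.
  split; [by rewrite /= mulr1; exact: (pN1 Hp)| by rewrite /= mul1r; exact: ng|].
  have /(leqE Hp) E := gE j.
  apply/(leqE Hp) => /=; rewrite !mul1r ?mulr1 !scalerA.
  have -> : (g j).2 * b j *: h j - (1 * (b j * s j)) *: (g j).1 = b j *: ((g j).2 *: h j - s j *: (g j).1).
    by rewrite mul1r scalerBr !scalerA mulrC [b j * s j]mulrC.
  apply: (zpZ Hp); rewrite -opprB; apply: (zpN Hp).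
  by move: E => /=.
have Gw : G w.
  apply/Gchar; split; first exact: (pN1 Hp).
  exists (fun j => (b j * s j, 1)); split; first by move=> ?; exact: (pN1 Hp).
  by case: Ew.
have w0 := GN Gw Nw.
have C0 : loc_comb (fun j => (b j * s j, 1)) g ~= loc_zero M.
  apply: (leq_trans Hp (y := w)); [exact: (pN1 Hp) | by case: Ew => _ _ /(leq_sym Hp) | exact: w0].
move=> j; have [u [nu hu]] := Gind (a := fun j => (b j * s j, 1)) (fun _ => pN1 Hp) C0 j.
apply: (@zpR_cancel (s j)); first exact: ns. exists u; split => //.
by move: hu => /=; rewrite mul1r mulr0 subr0 [s j * _]mulrC.
Qed.


Lemma B2 x : exists T (b : 'I_n -> R), ~ p T /\ N' (T *: x - \sum_j b j *: h j).
Proof.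
have [y [z [Gy [Nz E]]]] := Gcov (x := (x, 1)) (pN1 Hp).
have [ny [a [na Ey]]] := (Gchar y).1 Gy.
have nz : ~ p z.2 by case: Nsub => H _ _ _ _; apply: H.
set a2 := fun j => ((a j).1, (a j).2 * s j).
have na2 : forall j, ~ p (a2 j).2 by move=> j; rewrite /=; apply: (pM Hp).
have E1 : Er p (loc_comb a g) (loc_comb a2 hh).
  rewrite /loc_comb; apply: (Er_big Hp) => j.
  have -> : loc_scale (a2 j) (h j, 1) = loc_scale (a j) (h j, s j).
    by rewrite /loc_scale /= mulr1.
  apply: (Er_scale Hp) => //; split; [exact: ng | exact: ns | exact: gE].
have E2 := clear_denoms Hp h na2.
set T := \prod_i (a2 i).2 in E2.
set m := \sum_i ((a2 i).1 * \prod_(j | j != i) (a2 j).2) *: h i in E2.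
have nT : ~ p T by apply: (pprod Hp).
set z' := loc_scale (T, 1) z.
have nz' : ~ p z'.2 by rewrite /z' /=; apply: (pM Hp) => //; exact: (pN1 Hp).
have Nz' : N z' by case: Nsub => _ _ _ _ H; apply: H => //; exact: (pN1 Hp).
have F : Er p (loc_scale (T, 1) (x, 1)) (loc_add (m, 1) z').
  have ny2 : ~ p (loc_add y z).2 by rewrite /=; apply: (pM Hp).
  apply: (Er_trans Hp (y := loc_scale (T, 1) (loc_add y z))).
    by apply: (Er_scale Hp); [exact: (pN1 Hp) | split => //; exact: (pN1 Hp)].
  have nc1 : ~ p (T, 1 : R).2 by exact: (pN1 Hp).
  apply: (Er_trans Hp (Er_scale_add Hp nc1 ny nz)).
  apply: (Er_add Hp); last by apply: (Er_refl Hp).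
  apply: (Er_trans Hp (y := loc_scale (T, 1) (loc_comb a g))).
    apply: (Er_scale Hp); first exact: (pN1 Hp).
    by split => //; apply: comb_denom => // j; exact: ng.
  apply: (Er_trans Hp (y := loc_scale (T, 1) (loc_comb a2 hh))).
    by apply: (Er_scale Hp) => //; exact: (pN1 Hp).
  exact: E2.
case: F => _ _ /(leqE Hp) [u [nu hu]].
exists (u * z'.2 * T), (fun j => u * z'.2 * ((a2 j).1 * \prod_(i | i != j) (a2 i).2)); split.
  by apply: (pM Hp) => //; apply: (pM Hp).
have -> : \sum_j (u * z'.2 * ((a2 j).1 * \prod_(i | i != j) (a2 i).2)) *: h j = (u * z'.2) *: m.
  by rewrite /m scaler_sumr; apply: eq_bigr => j _; rewrite scalerA.
have -> : (u * z'.2 * T) *: x - (u * z'.2) *: m = u *: z'.1.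
  apply/eqP; rewrite -subr_eq0 -hu; apply/eqP.
  rewrite /= !mul1r !scale1r scalerBr scalerDr !scalerA opprD addrA !mulrA.
  done.
by apply: N'Z; apply: N_num.
Qed.


Lemma uniq_coord (T : R) x (b b' : 'I_n -> R) : N' (T *: x - \sum_j b j *: h j) ->
  N' (T *: x - \sum_j b' j *: h j) -> forall j, zpR p (b j - b' j).
Proof.
move=> H1 H2; apply: B1.
have -> : \sum_j (b j - b' j) *: h j = (T *: x - \sum_j b' j *: h j) - (T *: x - \sum_j b j *: h j).
  rewrite opprB addrC addrA subrK -sumrB; apply: eq_bigr => j _; by rewrite scalerBl.
exact: N'B.
Qed.

Variables (k : nat) (sg : 'I_k -> M) (rep : M -> 'I_k -> R).
Hypothesis Hrep : forall m, m = \sum_l rep m l *: sg l.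
Variables (Tl : 'I_k -> R) (bb : 'I_k -> 'I_n -> R).
Hypothesis HTl : forall l, ~ p (Tl l).
Hypothesis Hbb : forall l, N' (Tl l *: sg l - \sum_j bb l j *: h j).

Definition Tt := \prod_l Tl l.
Definition W l j := (\prod_(l' | l' != l) Tl l') * bb l j.

Lemma nTt : ~ p Tt.
Proof. by apply: (pprod Hp) => l _. Qed.

Lemma coordW l : N' (Tt *: sg l - \sum_j W l j *: h j).
Proof.
have -> : Tt *: sg l - \sum_j W l j *: h j =
   (\prod_(l' | l' != l) Tl l') *: (Tl l *: sg l - \sum_j bb l j *: h j).
  rewrite scalerBr scalerA scaler_sumr /Tt (bigD1 l) //= mulrC.
  by congr (_ - _); apply: eq_bigr => j _; rewrite scalerA.
exact: N'Z.
Qed.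

Lemma coord_comb (c : 'I_k -> R) :
  N' (Tt *: \sum_l c l *: sg l - \sum_j (\sum_l c l * W l j) *: h j).
Proof.
have -> : Tt *: \sum_l c l *: sg l - \sum_j (\sum_l c l * W l j) *: h j =
   \sum_l c l *: (Tt *: sg l - \sum_j W l j *: h j).
  rewrite scaler_sumr.
  under [X in _ - X]eq_bigr => j _ do rewrite scaler_suml.
  rewrite exchange_big /= -sumrB.
  apply: eq_bigr => l _.
  rewrite scalerBr scaler_sumr !scalerA mulrC; congr (_ - _).
  by apply: eq_bigr => j _; rewrite scalerA.
by apply: N'_sum => l _; apply: N'Z; apply: coordW.
Qed.

Definition relm (c : 'I_k -> R) := \sum_l c l *: sg l = 0.

Lemma rel_zp (c : 'I_k -> R) : relm c -> forall j, zpR p (\sum_l c l * W l j).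
Proof.
move=> Hc j.
have H1 : N' (Tt *: 0 - \sum_j (\sum_l c l * W l j) *: h j).
  by have := coord_comb c; rewrite Hc.
have H2 : N' (Tt *: 0 - \sum_j (fun _ => 0 : R) j *: h j).
  by rewrite scaler0 big1 ?subr0 //; [exact: N'0 | move=> j' _; rewrite scale0r].
by have := uniq_coord H1 H2 j; rewrite subr0.
Qed.

Definition Lid := fun r : R => exists C : 'I_n -> 'I_k -> R,
  (forall j, relm (C j)) /\ r = \sum_j \sum_l C j l * W l j.

Lemma Lid_ideal : ideal Lid.
Proof.
split.
- exists (fun _ _ => 0); split.
    by move=> j; rewrite /relm big1 // => l _; rewrite scale0r.
  by rewrite big1 // => j _; rewrite big1 // => l _; rewrite mul0r.
- move=> x y [C [HC ->]] [D [HD ->]]; exists (fun j l => C j l + D j l); split.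
    by move=> j; rewrite /relm (eq_bigr (fun l => C j l *: sg l + D j l *: sg l));
      [rewrite big_split /= HC HD addr0 | move=> l _; rewrite scalerDl].
  rewrite -big_split /=; apply: eq_bigr => j _; rewrite -big_split /=.
  by apply: eq_bigr => l _; rewrite mulrDl.
- move=> a x [C [HC ->]]; exists (fun j l => a * C j l); split.
    move=> j; rewrite /relm (eq_bigr (fun l => a *: (C j l *: sg l))).
      by rewrite -scaler_sumr HC scaler0.
    by move=> l _; rewrite scalerA.
  rewrite mulr_sumr; apply: eq_bigr => j _; rewrite mulr_sumr.
  by apply: eq_bigr => l _; rewrite mulrA.
Qed.

Lemma Lid_zp r : Lid r -> zpR p r.
Proof.
move=> [C [HC ->]].
apply: (big_ind (zpR p)); [ | exact: zpR_add | by move=> j _; apply: rel_zp].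
exists 1; split; [exact: (pN1 Hp) | by rewrite mulr0].
Qed.

Lemma exU : exists U, ~ p U /\ forall c, relm c -> forall j, U * \sum_l c l * W l j = 0.
Proof.
have [t [tL tgen]] := HR Lid_ideal.
have [U [nU hU]] := zpR_fin (f := fun i : 'I_(size t) => t`_i) (fun i => Lid_zp (tL _ (mem_nth 0 (ltn_ord i)))).
exists U; split => // c Hc j.
have Lr : Lid (\sum_l c l * W l j).
  exists (fun j' l => if j' == j then c l else 0); split.
    move=> j'; case: eqP => _ //.
    by rewrite /relm big1 // => l _; rewrite scale0r.
  rewrite (bigD1 j) //= eqxx [X in _ = _ + X]big1 ?addr0 // => jj /negbTE ->.
  by rewrite big1 // => l _; rewrite mul0r.
have [d ->] := (tgen _).1 Lr.
rewrite mulr_sumr big1 // => i _.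
by rewrite mulrCA hU mulr0.
Qed.


Variable U : R.
Hypothesis nU : ~ p U.
Hypothesis HU : forall c, relm c -> forall j, U * \sum_l c l * W l j = 0.

Definition psiDef (x : M) : 'rV[R]_n := \row_j (U * \sum_l rep x l * W l j).

Lemma psiB_any x (c : 'I_k -> R) : x = \sum_l c l *: sg l ->
  psiDef x = \row_j (U * \sum_l c l * W l j).
Proof.
move=> Hx; apply/rowP => j; rewrite !mxE.
have Hd : relm (fun l => rep x l - c l).
  rewrite /relm (eq_bigr (fun l => rep x l *: sg l - c l *: sg l)); last by move=> l _; rewrite scalerBl.
  by rewrite sumrB -Hrep -Hx subrr.
have := HU Hd j.
rewrite (eq_bigr (fun l => rep x l * W l j - c l * W l j)); last by move=> l _; rewrite mulrBl.
by rewrite sumrB mulrBr => /eqP; rewrite subr_eq0 => /eqP.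
Qed.

Lemma psiB_lin : lin psiDef.
Proof.
move=> r x y.
rewrite (psiB_any (c := fun l => r * rep x l + rep y l)); last first.
  rewrite (eq_bigr (fun l => r *: (rep x l *: sg l) + rep y l *: sg l)); last first.
    by move=> l _; rewrite scalerDl scalerA.
  by rewrite big_split /= -scaler_sumr -!Hrep.
apply/rowP => j; rewrite !mxE.
rewrite (eq_bigr (fun l => r * (rep x l * W l j) + rep y l * W l j)); last by move=> l _; ring.
by rewrite big_split /= -mulr_sumr; ring.
Qed.

Lemma psiB_det : ~ p (\det (\matrix_(j < n) psiDef (h j))).
Proof.
have Hv : forall j0, exists v, ~ p v /\ forall j,
    v * (\sum_l rep (h j0) l * W l j - Tt * (j == j0)%:R) = 0.
  move=> j0; apply: (zpR_fin (f := fun j => \sum_l rep (h j0) l * W l j - Tt * (j == j0)%:R)) => j.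
  have H1 : N' (Tt *: h j0 - \sum_j (\sum_l rep (h j0) l * W l j) *: h j).
    by have := coord_comb (rep (h j0)); rewrite -Hrep.
  have H2 : N' (Tt *: h j0 - \sum_j (fun j => Tt * (j == j0)%:R) j *: h j).
    have -> : \sum_j (fun j => Tt * (j == j0)%:R) j *: h j = Tt *: h j0.
      rewrite (bigD1 j0) //= eqxx mulr1 [X in _ + X]big1 ?addr0 // => j' /negbTE ->.
      by rewrite mulr0 scale0r.
    by rewrite subrr; exact: N'0.
  exact: (uniq_coord H1 H2 j).
have [v hv] := choice Hv.
set V := \prod_j0 v j0.
have nV : ~ p V by apply: (pprod Hp) => j0 _; case: (hv j0).
have EA : V *: (\matrix_(j < n) psiDef (h j)) = (V * U * Tt)%:M.
  apply/matrixP => j0 j; rewrite !mxE.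
  have := (hv j0).2 j; rewrite mulrBr => /eqP; rewrite subr_eq0 => /eqP e.
  have EV : V = v j0 * \prod_(i | i != j0) v i by rewrite /V (bigD1 j0).
  rewrite EV.
  rewrite (_ : v j0 * \prod_(i | i != j0) v i * (U * \sum_l rep (h j0) l * W l j) =
     \prod_(i | i != j0) v i * U * (v j0 * \sum_l rep (h j0) l * W l j)); last by ring.
  rewrite e; case: (j =P j0) => [->|ne]; first by rewrite eqxx mulr1 mulr1n; ring.
  have ne' : j0 <> j by move=> x; apply: ne.
  by rewrite ?(introF eqP ne) ?(introF eqP ne') ?mulr0 ?mulr0n ?mulr0.
move=> hd; have := detZ V (\matrix_(j < n) psiDef (h j)); rewrite EA det_scalar.
move=> e; have : p ((V * U * Tt) ^+ n) by rewrite e; apply: (pMl Hp).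
by apply: (pX Hp); apply: (pM Hp); [apply: (pM Hp) | exact: nTt].
Qed.

End LemmaB.

Section Cert.
Local Open Scope ring_scope.
Variables (R : comPzRingType) (M : lmodType R).

Definition Cert (p : set R) (S : set M) (n : nat) := exists h : 'I_n -> M,
  (forall j, gen_submod S (h j)) /\ exists psi : M -> 'rV[R]_n, lin psi /\
     ~ p (\det (\matrix_(j < n) psi (h j))).

Lemma cert_delta p S n : prime_ideal p -> Cert p S n -> delta_prop p S n.
Proof. by move=> Hp [h [hS [psi [Hpsi Hdet]]]]; apply: (lemmaA Hp hS Hpsi Hdet). Qed.

Lemma delta_cert p S n : noetherian R -> fin_gen_module M -> prime_ideal p ->
  delta_prop p S n -> Cert p S n.
Proof.
move=> HR HM Hp [G [[Gsub [g [Gg [Gchar Gind]]]] [GS [N [Nsub [GN Gcov]]]]]].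
have Hhs : forall j, exists hs : M * R, [/\ gen_submod S hs.1, ~ p hs.2 & locM_eq p (g j) hs].
  move=> j; have [_ [m [s [Hm [ns E]]]]] := GS _ (Gg j).
  by exists (m, s).
have [hs Ehs] := choice Hhs.
set h := fun j => (hs j).1; set s := fun j => (hs j).2.
have ns : forall j, ~ p (s j) by move=> j; case: (Ehs j) => _ ? _.
have gE : forall j, locM_eq p (g j) (h j, s j).
  by move=> j; have [_ _] := Ehs j; rewrite /h /s; case: (hs j).
have [sq Hsq] := HM.
have [rep Hrep] := choice Hsq.
set k := size sq; set sg := fun l : 'I_k => sq`_l.
have HB2 : forall l : 'I_k, exists Tb : R * ('I_n -> R),
    ~ p Tb.1 /\ N' N (Tb.1 *: sg l - \sum_j Tb.2 j *: h j).
  move=> l; have [T [b [nT HN]]] := B2 Hp Gsub Gg Gchar Nsub Gcov ns gE (sg l).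
  by exists (T, b).
have [Tb HTb] := choice HB2.
set Tl := fun l => (Tb l).1; set bb := fun l => (Tb l).2.
have HTl : forall l, ~ p (Tl l) by move=> l; case: (HTb l).
have Hbb : forall l, N' N (Tl l *: sg l - \sum_j bb l j *: h j) by move=> l; case: (HTb l).
have [U [nU HU]] := exU Hp HR Gsub Gg Gchar Gind Nsub GN ns gE Hbb.
exists h; split; first by move=> j; case: (Ehs j) => ? _ _.
exists (psiDef rep Tl bb U); split; first exact: (psiB_lin Hrep HU).
exact: (psiB_det Hp Gsub Gg Gchar Gind Nsub GN ns gE Hrep HTl Hbb nU).
Qed.

End Cert.



Section Bound.
Local Open Scope ring_scope.
Variables (R : comPzRingType).

Lemma det_mul_small n K (C : 'M[R]_(n, K)) (B : 'M[R]_(K, n)) : (K < n)%N -> \det (C *m B) = 0.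
Proof.
move=> Kn.
pose C' : 'M[R]_n := \matrix_(j, l) (if insub (val l) is Some l' then C j l' else 0).
pose B' : 'M[R]_n := \matrix_(l, i) (if insub (val l) is Some l' then B l' i else 0).
have E : C *m B = C' *m B'.
  apply/matrixP => j i; rewrite !mxE.
  pose F m := if insub m is Some l' then C j l' * B l' i else 0.
  have -> : \sum_l C' j l * B' l i = \sum_(l < n) F l.
    by apply: eq_bigr => l _; rewrite !mxE /F; case: insub => [l'|]; rewrite ?mul0r.
  have -> : \sum_l C j l * B l i = \sum_(l < K) F l.
    by apply: eq_bigr => l _; rewrite /F valK.
  rewrite -!(big_mkord xpredT F) [in RHS](big_cat_nat _ (n := K)) //=; last exact: (ltnW Kn).
  rewrite [X in _ = _ + X]big1_seq ?addr0 // => m /andP [_].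
  rewrite mem_index_iota => /andP [Km _]; rewrite /F insubF //.
  by apply/negbTE; rewrite -leqNgt.
rewrite E det_mulmx.
have -> : \det C' = 0.
  rewrite (expand_det_col _ (Ordinal Kn)) big1 // => j _.
  by rewrite !mxE insubF ?mul0r //= ltnn.
by rewrite mul0r.
Qed.


Variable M : lmodType R.

Lemma cert_bound : fin_gen_module M -> exists K, forall p S n, prime_ideal p ->
  @Cert R M p S n -> (n <= K)%N.
Proof.
move=> [sq Hsq]; have [rep Hrep] := choice Hsq.
exists (size sq) => p S n Hp [h [hS [psi [Hpsi Hdet]]]].
rewrite leqNgt; apply/negP => Kn; apply: Hdet.
pose C : 'M[R]_(n, size sq) := \matrix_(j, l) rep (h j) l.
pose B : 'M[R]_(size sq, n) := \matrix_(l, i) psi sq`_l 0 i.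
have -> : \matrix_(j < n) psi (h j) = C *m B.
  apply/matrixP => j i; rewrite !mxE.
  rewrite {1}(Hrep (h j)) (psi_sum Hpsi) summxE; apply: eq_bigr => l _.
  by rewrite (psiZ Hpsi) !mxE.
by rewrite det_mul_small //; apply: (p0 Hp).
Qed.

End Bound.



Section Key.
Local Open Scope ring_scope.
Variables (R : comPzRingType) (M : lmodType R).
Hypothesis HR : noetherian R.
Hypothesis HM : fin_gen_module M.
Variable S : set M.

Lemma key q : prime_ideal q -> exists f, ~ q f /\
  forall p, prime_ideal p -> ~ p f -> (q `<=` p)%classic -> delta p S = delta q S.
Proof.
move=> Hq.
have [K HK] := cert_bound HM.
have Hd : forall n : nat, exists d, ~ q d /\ (Cert q S n -> forall p, prime_ideal p -> ~ p d -> Cert p S n).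
  move=> n; have [[h [hS [psi [Hpsi Hdet]]]]|nC] := pselect (Cert q S n).
    exists (\det (\matrix_(j < n) psi (h j))); split => // _ p Hp nd.
    by exists h; split => //; exists psi.
  by exists 1; split; [exact: (pN1 Hq) | move=> /nC].
have [d Hdd] := choice Hd.
exists (\prod_(i < K.+1) d i); split.
  by apply: (pprod Hq) => i _; case: (Hdd i).
move=> p Hp nf qp.
have E : delta_prop p S = delta_prop q S.
  apply: funext => n; apply: propext; split.
    move=> /(delta_cert HR HM Hp) [h [hS [psi [Hpsi Hdet]]]].
    apply: (cert_delta Hq); exists h; split => //; exists psi; split => //.
    by move=> /qp.
  move=> /(delta_cert HR HM Hq) C.
  have nK := HK _ _ _ Hq C.
  apply: (cert_delta Hp); apply: ((Hdd n).2 C p Hp).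
  move=> pd; apply: nf.
  by rewrite (bigD1 (Ordinal (n := K.+1) (m := n) nK)) //=; apply: (pMr Hp).
by rewrite /delta E.
Qed.

End Key.

Section NoethInd.
Local Open Scope ring_scope.
Variables (R : comPzRingType).
Hypothesis HR : noetherian R.

Lemma ideal_sum (I : set R) (n : nat) (c t : 'I_n -> R) : ideal I -> (forall i, I (t i)) ->
  I (\sum_i c i * t i).
Proof.
move=> [I0 ID IM] Ht; apply: (big_ind I) => // i _; exact: IM.
Qed.

Lemma noeth_ind (P : set R -> Prop) :
  (forall J, ideal J -> (forall J', ideal J' -> (J `<=` J')%classic -> ~ (J' `<=` J)%classic -> P J') -> P J) ->
  forall J, ideal J -> P J.
Proof.
move=> H J0 HJ0; have [//|nP0] := pselect (P J0); exfalso.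
have step : forall J : set R, exists J', ideal J /\ ~ P J ->
    [/\ ideal J', ~ P J', (J `<=` J')%classic & ~ (J' `<=` J)%classic].
  move=> J; have [[iJ nJ]|] := pselect (ideal J /\ ~ P J); last first.
    by move=> nh; exists J => /nh.
  have [//|hn] := pselect (exists J', ideal J /\ ~ P J ->
    [/\ ideal J', ~ P J', (J `<=` J')%classic & ~ (J' `<=` J)%classic]).
  exfalso; apply: nJ; apply: H => // J' iJ' s1 s2.
  have [//|nJ'] := pselect (P J'); exfalso; apply: hn; exists J' => _; by split.
have [nxt Hn] := choice step.
pose c k := iter k nxt J0.
have Hc : forall k, ideal (c k) /\ ~ P (c k).
  elim=> [|k [ik nk]]; first by split.
  by have [i1 n1 _ _] := Hn (c k) (conj ik nk); split.
have Hs : forall k, [/\ (c k `<=` c k.+1)%classic & ~ (c k.+1 `<=` c k)%classic].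
  by move=> k; have [_ _ ? ?] := Hn (c k) (Hc k); split.
have Hmono : forall k l, (k <= l)%N -> (c k `<=` c l)%classic.
  move=> k l /subnK <-; elim: (l - k)%N => [|m IH] //=.
  rewrite ?addSn; apply: subset_trans IH _; by case: (Hs (m + k)%N).
pose U := fun x => exists k, c k x.
have iU : ideal U.
  split.
  - by exists 0%N; case: (Hc 0%N) => -[].
  - move=> x y [k xk] [l yl]; exists (maxn k l).
    have [[_ HD _] _] := Hc (maxn k l).
    by apply: HD; [apply: (Hmono k) => //; rewrite leq_maxl | apply: (Hmono l) => //; rewrite leq_maxr].
  - move=> a x [k xk]; exists k; have [[_ _ HM] _] := Hc k; exact: HM.
have [t [tU tgen]] := HR iU.
have Hk : forall i : 'I_(size t), exists k, c k t`_i.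
  by move=> i; apply: tU; apply: mem_nth.
have [kk Hkk] := choice Hk.
pose Km := (\max_i kk i)%N.
have sub : (U `<=` c Km)%classic.
  move=> x /tgen [co ->]; apply: ideal_sum; first by case: (Hc Km).
  move=> i; apply: (Hmono (kk i)); last exact: Hkk.
  exact: (leq_bigmax i).
have [_ ns] := Hs Km; apply: ns => x hx; apply: sub; by exists Km.+1.
Qed.

End NoethInd.

Section AddI.
Local Open Scope ring_scope.
Variables (R : comPzRingType).
Definition addI (J : set R) (a : R) := fun x => exists c r, J c /\ x = c + r * a.

Lemma addI_ideal J a : ideal J -> ideal (addI J a).
Proof.
move=> [J0 JD JM]; split.
- by exists 0, 0; split => //; rewrite mul0r addr0.
- move=> x y [c [r [Jc ->]]] [c' [r' [Jc' ->]]]; exists (c + c'), (r + r'); split; first exact: JD.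
  by ring.
- move=> b x [c [r [Jc ->]]]; exists (b * c), (b * r); split; first exact: JM.
  by ring.
Qed.

Lemma addI_sub J a : (J `<=` addI J a)%classic.
Proof. by move=> x Jx; exists x, 0; split => //; rewrite mul0r addr0. Qed.

Lemma addI_a J a : ideal J -> addI J a a.
Proof. by move=> [J0 _ _]; exists 0, 1; split => //; rewrite mul1r add0r. Qed.

Lemma addI_in J a (p : set R) : prime_ideal p -> (J `<=` p)%classic -> p a -> (addI J a `<=` p)%classic.
Proof.
move=> [[_ pD pM] _ _] Jp pa x [c [r [Jc ->]]]; apply: pD; first exact: Jp.
exact: pM.
Qed.
End AddI.

Unset Implicit Arguments.
Local Open Scope classical_set_scope.

Theorem lemma3p6 (R : comPzRingType) (M : lmodType R)
    (HR : noetherian R) (HM : fin_gen_module M)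
    (X : set (set R)) (HXspec : X `<=` @prime_ideal R) (HX : basic X)
    (S : set M) :
  exists Lambda : set (set R),
    [/\ finite_set Lambda, Lambda `<=` X &
      forall p, X p -> ~ Lambda p ->
        exists q, [/\ Lambda q, q `<` p & delta p S = delta q S]].
Proof.
pose Q := fun J : set R => exists Lambda : set (set R),
    [/\ finite_set Lambda, Lambda `<=` X &
      forall p, X p -> J `<=` p -> ~ Lambda p ->
        exists q, [/\ Lambda q, q `<` p & delta p S = delta q S]].
have main : forall J, ideal J -> Q J.
  apply: (noeth_ind HR) => J iJ IH.
  pose Y := [set p | X p /\ J `<=` p].
  have [[p0 Yp0]|Y0] := pselect (exists p, Y p); last first.
    exists set0; split; [exact: finite_set0 | by [] | ].
    by move=> p Xp Jp; exfalso; apply: Y0; exists p.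
  pose K := \bigcap_(q in Y) q.
  have iK : ideal K.
    split.
    - by move=> q [Xq _]; case: (HXspec _ Xq) => -[].
    - move=> x y hx hy q Yq; have [[_ HD _] _ _] := HXspec _ Yq.1.
      by apply: HD; [exact: hx | exact: hy].
    - move=> a x hx q Yq; have [[_ _ HM'] _ _] := HXspec _ Yq.1.
      by apply: HM'; exact: hx.
  have JK : J `<=` K by move=> x Jx q [_ Jq]; apply: Jq.
  have YK : forall p, X p -> J `<=` p -> K `<=` p by move=> p Xp Jp x Kx; apply: Kx.
  have [KJ|nKJ] := pselect (K `<=` J); last first.
    have [L [fL LX HL]] := IH K iK JK nKJ.
    exists L; split => // p Xp Jp; apply: HL => //; exact: YK.
  have [pK|npK] := pselect (prime_ideal K).
    have XK : X K by apply: HX => // q [].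
    have [f [nf Hf]] := key HR HM S pK.
    have [L [fL LX HL]] := IH (addI J f) (addI_ideal f iJ) (@addI_sub _ J f)
       (fun h => nf (JK _ (h _ (addI_a f iJ)))).
    exists (L `|` [set K]); split.
    - by rewrite finite_setU; split => //; exact: finite_set1.
    - by move=> q [/LX //| ->].
    move=> p Xp Jp nL.
    have Hp := HXspec _ Xp.
    have [pf|npf] := pselect (p f).
      have [q [Lq qp E]] := HL p Xp (addI_in Hp Jp pf) (fun h => nL (or_introl h)).
      by exists q; split => //; left.
    have KP := YK p Xp Jp.
    exists K; split; [by right | split => // |].
      move=> pK'; apply: nL; right; apply/seteqP; split => //.
    exact: (Hf p Hp npf KP).
  have nK1 : ~ K 1%R.
    by move=> K1; have [_ n1 _] := HXspec _ Yp0.1; apply: n1; apply: K1.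
  have [a [b [Kab nKa nKb]]] : exists a b, [/\ K (a * b)%R, ~ K a & ~ K b].
    have [//|hn] := pselect (exists a b, [/\ K (a * b)%R, ~ K a & ~ K b]).
    exfalso; apply: npK; split => // a b Kab.
    have [Ka|nKa] := pselect (K a); first by left.
    have [Kb|nKb] := pselect (K b); first by right.
    by exfalso; apply: hn; exists a, b.
  have [La [fLa LaX HLa]] := IH (addI J a) (addI_ideal a iJ) (@addI_sub _ J a)
       (fun h => nKa (JK _ (h _ (addI_a a iJ)))).
  have [Lb [fLb LbX HLb]] := IH (addI J b) (addI_ideal b iJ) (@addI_sub _ J b)
       (fun h => nKb (JK _ (h _ (addI_a b iJ)))).
  exists (La `|` Lb); split.
  - by rewrite finite_setU.
  - by move=> q [/LaX|/LbX].
  move=> p Xp Jp nL.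
  have Hp := HXspec _ Xp.
  have [_ _ Hpr] := Hp.
  have [pa|pb] := Hpr _ _ (YK p Xp Jp _ Kab).
    have [q [Lq qp E]] := HLa p Xp (addI_in Hp Jp pa) (fun h => nL (or_introl h)).
    by exists q; split => //; left.
  have [q [Lq qp E]] := HLb p Xp (addI_in Hp Jp pb) (fun h => nL (or_intror h)).
  by exists q; split => //; right.
have i0 : ideal (fun x : R => x = 0%R).
  split => //.
  - by move=> x y -> ->; rewrite addr0.
  - by move=> a x ->; rewrite mulr0.
have [L [fL LX HL]] := main _ i0.
exists L; split => // p Xp nL; apply: HL => // x ->.
exact: (p0 (HXspec _ Xp)).
Qed.
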